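(* Let $\mathcal G=(\mathcal N,E)$ be an undirected graph on $N$ nodes with adjacency-type matrix $A$ and maximal degree $d_{\max}$ (defined in the context), and let $x^\star$ be any solution of $$\min_{x\in\mathbb R^N}\mathbf 1^\top x\quad\text{s.t.}\quad Ax\ge\mathbf 1,\ x\ge 0.$$ Run Algorithm 1 (described in the context) with $\delta=\epsilon$ and $\alpha=\frac{\delta}{2(d_{\max}+1)^2}$, where $\epsilon>0$. Then the $(1+\epsilon)$-approximation ratio $\frac{\mathbf 1^\top x^{(K_\epsilon)}-\mathbf 1^\top x^\star}{\mathbf 1^\top x^\star}\le\epsilon$ is achieved after $K_\epsilon=O\big(d_{\max}^{3/2}/\epsilon\big)$ iterations; precisely, there is an absolute constant $C>0$ such that for all $\epsilon\in(0,1]$ and all such graphs the ratio holds for every $k\ge C\,(d_{\max}+1)^{3/2}/\epsilon$.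
   Context: $A$ is the $N\times N$ symmetric matrix with $A_{ii}=1$ for all $i$ and, for $i\ne j$, $A_{ij}=1$ if $\{i,j\}\in E$, $A_{ij}=0$ otherwise. $\Omega_i$ is the closed one-hop neighborhood of node $i$ (its neighbors together with $i$). $d_{\max}$ is the maximal degree of $\mathcal G$, where the degree of $i$ is its number of neighbors excluding $i$, i.e. $|\Omega_i|-1$. $\mathbf 1$ is the all-ones vector, $[c]_+=\max\{0,c\}$, and $\mathcal P_{[0,1]}(c)=\min\{1,\max\{0,c\}\}$. Algorithm 1: initialize $\lambda_i^{(0)}=0$ and $z_i^{(-1)}=0$ for all $i$ (the value of $\overline x_j^{(-1)}$ is irrelevant since it is multiplied by $0$). For $k=0,1,2,\dots$, each node $i$ computes $$\widehat x_i^{(k)}=\mathcal P_{[0,1]}\Big(\tfrac1\delta\big(\textstyle\sum_{j\in\Omega_i}\lambda_j^{(k)}-1\big)\Big),$$ and then $$z_i^{(k)}=z_i^{(k-1)}+\tfrac{k+1}{2}\Big(1-\textstyle\sum_{j\in\Omega_i}\widehat x_j^{(k)}\Big),\qquad \mu_i^{(k)}=\Big[\lambda_i^{(k)}+\alpha\big(1-\textstyle\sum_{j\in\Omega_i}\widehat x_j^{(k)}\big)\Big]_+,$$ $$\lambda_i^{(k+1)}=\tfrac{k+1}{k+3}\mu_i^{(k)}+\tfrac{2}{k+3}\,\alpha\,[z_i^{(k)}]_+,\qquad \overline x_j^{(k)}=\tfrac{k}{k+2}\overline x_j^{(k-1)}+\tfrac{2}{k+2}\widehat x_j^{(k)},$$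 $$x_i^{(k)}=\overline x_i^{(k)}+\Big[1-\textstyle\sum_{j\in\Omega_i}\overline x_j^{(k)}\Big]_+ .$$ *)

(* Defs.v *)
From HB Require Import structures.
From mathcomp Require Import all_boot all_order all_algebra.
From mathcomp Require Import reals.
Set Implicit Arguments. Unset Strict Implicit. Unset Printing Implicit Defensive.
Import Order.TTheory GRing.Theory Num.Theory.
Local Open Scope ring_scope.

Section Defs.
Variable R : realType.
Variable N : nat.
(* undirected graph on nodes 'I_N : symmetric irreflexive edge relation e *)
Variable e : rel 'I_N.

Definition Omega (i : 'I_N) : {set 'I_N} := [set j | (j == i) || e i j].

Definition degree (i : 'I_N) : nat := (#|Omega i|).-1.
Definition dmax : nat := \max_(i : 'I_N) degree i.

Definition adjA : 'M[R]_N := \matrix_(i, j) (((i == j) || e i j) : bool)%:R.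

Definition ones : 'cV[R]_N := const_mx 1.

Definition lp_feasible (x : 'cV[R]_N) : Prop :=
  (forall i, 1 <= (adjA *m x) i 0) /\ (forall i, 0 <= x i 0).
Definition lp_obj (x : 'cV[R]_N) : R := \sum_i x i 0.
Definition lp_optimal (x : 'cV[R]_N) : Prop :=
  lp_feasible x /\ forall y, lp_feasible y -> lp_obj x <= lp_obj y.

Definition pos (c : R) : R := Num.max 0 c.
Definition proj01 (c : R) : R := Num.min 1 (Num.max 0 c).

Definition nsum (v : 'I_N -> R) (i : 'I_N) : R := \sum_(j in Omega i) v j.

Variables delta alpha : R.

(* state before iteration k : (lambda^(k), z^(k-1), xbar^(k-1)) *)
Record alg_state := AlgState {
  st_lambda : 'I_N -> R; st_z : 'I_N -> R; st_xbar : 'I_N -> R }.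

Definition xhat_of (s : alg_state) (i : 'I_N) : R :=
  proj01 (delta^-1 * (nsum (st_lambda s) i - 1)).

Definition alg_step (k : nat) (s : alg_state) : alg_state :=
  let xh := xhat_of s in
  let zk := fun i => st_z s i + (k.+1)%:R / 2 * (1 - nsum xh i) in
  let mu := fun i => pos (st_lambda s i + alpha * (1 - nsum xh i)) in
  let lam := fun i => (k.+1)%:R / (k.+3)%:R * mu i
                      + 2 / (k.+3)%:R * alpha * pos (zk i) in
  let xb := fun j => k%:R / (k.+2)%:R * st_xbar s j + 2 / (k.+2)%:R * xh j in
  AlgState lam zk xb.

Definition alg_init : alg_state := AlgState (fun _ => 0) (fun _ => 0) (fun _ => 0).

Fixpoint alg_state_at (k : nat) : alg_state :=
  if k is k'.+1 then alg_step k' (alg_state_at k') else alg_init.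

Definition xbar (k : nat) : 'I_N -> R := st_xbar (alg_state_at k.+1).

Definition alg_x (k : nat) : 'cV[R]_N :=
  \col_i (xbar k i + pos (1 - nsum (xbar k) i)).

End Defs.

(* Main.v *)
Require Import Defs.
From HB Require Import structures.
From mathcomp Require Import all_boot all_order all_algebra.
From mathcomp Require Import reals.
From mathcomp Require Import ring lra.
Import Order.TTheory GRing.Theory Num.Theory.
Local Open Scope ring_scope.

Section Coord.
Variable R : realType.

Lemma coord_min (delta c s t : R) : 0 < delta -> 0 <= s <= 1 ->
  t = proj01 (delta^-1 * (c - 1)) ->
  t + delta/2 * t^+2 - c*t + delta/2*(s-t)^+2 <= s + delta/2*s^+2 - c*s.
Proof.
move=> hd /andP[s0 s1] ht.
have e : s + delta/2*s^+2 - c*s = t + delta/2 * t^+2 - c*t + delta/2*(s-t)^+2 + (delta * t + 1 - c) * (s - t) by field.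
rewrite e lerDl.
suff: 0 <= (delta * t + 1 - c) * (s - t) by [].
have hw : c - 1 = delta * (delta^-1 * (c - 1)) by rewrite mulrA mulfV ?mul1r // gt_eqF.
move: hw ht; rewrite /proj01; set w := delta^-1 * (c - 1) => hw.
rewrite maxElt; case: ifP => hw0; rewrite minElt; case: ifP => h1 ->.
- have hw1 : delta <= delta * w by rewrite ler_pMr // ltW.
  apply: mulr_le0; lra.
- have -> : delta * w + 1 - c = 0 by lra.
  by rewrite mul0r.
- lra.
- have hw0' : w <= 0 by rewrite leNgt hw0.
  have : delta * w <= 0 by rewrite pmulr_rle0.
  move=> hdw; apply: mulr_ge0; lra.
Qed.

Lemma coord_proj (alpha l g y : R) : 0 < alpha -> 0 <= y ->
  y * g - (2*alpha)^-1 * (y - l)^+2 <= pos (l + alpha * g) * g - (2*alpha)^-1 * (pos (l + alpha * g) - l)^+2.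
Proof.
move=> ha hy.
have hK0 : 0 < (2*alpha)^-1 by rewrite invr_gt0 mulr_gt0.
rewrite /pos maxElt; case: ifP => h.
- have e : (l + alpha * g) * g - (2*alpha)^-1 * ((l + alpha * g) - l) ^+ 2 - (y * g - (2*alpha)^-1 * (y - l) ^+ 2) = (2*alpha)^-1 * (y - (l + alpha * g))^+2.
    by field; lra.
  have : 0 <= (2*alpha)^-1 * (y - (l + alpha * g))^+2 by rewrite mulr_ge0 // ?sqr_ge0 // ltW.
  lra.
- have h' : l + alpha * g <= 0 by rewrite leNgt h.
  have e : 0 * g - (2*alpha)^-1 * (0 - l) ^+ 2 - (y * g - (2*alpha)^-1 * (y - l) ^+ 2) = (2*alpha)^-1 * (y * (y - 2 * (l + alpha * g))).
    by field; lra.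
  have : 0 <= (2*alpha)^-1 * (y * (y - 2 * (l + alpha * g))).
    apply: mulr_ge0; first exact: ltW.
    apply: mulr_ge0; lra.
  lra.
Qed.

Lemma coord_sc (alpha z y : R) : 0 < alpha -> 0 <= y ->
  z * y - (2*alpha)^-1 * y^+2 + (2*alpha)^-1 * (y - alpha * pos z)^+2
  <= z * (alpha * pos z) - (2*alpha)^-1 * (alpha * pos z)^+2.
Proof.
move=> ha hy.
have hK0 : 0 < (2*alpha)^-1 by rewrite invr_gt0 mulr_gt0.
rewrite /pos maxElt; case: ifP => h.
- have e : z * y - (2*alpha)^-1 * y^+2 + (2*alpha)^-1 * (y - alpha * z)^+2 = z * (alpha * z) - (2*alpha)^-1 * (alpha * z)^+2.
    by field; lra.
  by rewrite e.
- have h' : z <= 0 by rewrite leNgt h.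
  have e : z * y - (2*alpha)^-1 * y^+2 + (2*alpha)^-1 * (y - alpha * 0)^+2 = z * y.
    by field; lra.
  rewrite e mulr0 mulr0 expr0n /= mulr0 subr0.
  by rewrite mulr_le0_ge0.
Qed.

Lemma amgm (c p q : R) : 0 < c -> p * q <= c / 2 * p^+2 + (2 * c)^-1 * q^+2.
Proof.
move=> hc.
have e : c / 2 * p^+2 + (2 * c)^-1 * q^+2 - p * q = (c * p - q)^+2 / (2 * c) by field; lra.
have : 0 <= (c * p - q)^+2 / (2 * c) by rewrite divr_ge0 ?sqr_ge0 // ltW // mulr_gt0.
lra.
Qed.

Lemma convq (delta p x u : R) : 0 <= delta -> 0 <= p <= 1 ->
  (p * x + (1 - p) * u) + delta / 2 * (p * x + (1 - p) * u)^+2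
  <= p * (x + delta/2 * x^+2) + (1 - p) * (u + delta / 2 * u^+2).
Proof.
move=> hd /andP[p0 p1].
have e : p * (x + delta/2 * x^+2) + (1 - p) * (u + delta / 2 * u^+2) - ((p * x + (1 - p) * u) + delta / 2 * (p * x + (1 - p) * u)^+2) = delta / 2 * (p * (1 - p) * (x - u)^+2) by field.
have : 0 <= delta / 2 * (p * (1 - p) * (x - u)^+2).
  rewrite mulr_ge0 ?divr_ge0 // mulr_ge0 ?sqr_ge0 // mulr_ge0 //; lra.
lra.
Qed.

Lemma quadb (c r : R) : 0 < c -> r - c * r^+2 <= (4 * c)^-1.
Proof.
move=> hc.
have e : (4 * c)^-1 - (r - c * r^+2) = (2 * c * r - 1)^+2 / (4 * c) by field; lra.
have : 0 <= (2 * c * r - 1)^+2 / (4 * c) by rewrite divr_ge0 ?sqr_ge0 // ltW // mulr_gt0.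
lra.
Qed.
End Coord.

Section Graph.
Variable R : realType.
Variable N : nat.
Variable e : rel 'I_N.
Hypothesis esym : symmetric e.

Let d1 : R := (dmax e).+1%:R.

Lemma omega_sym (i j : 'I_N) : (j \in Omega e i) = (i \in Omega e j).
Proof. by rewrite !inE eq_sym esym. Qed.

Lemma nsumE (v : 'I_N -> R) i :
  nsum e v i = \sum_j (if j \in Omega e i then v j else 0).
Proof. by rewrite /nsum big_mkcond. Qed.

Lemma swap (a b : 'I_N -> R) :
  \sum_i a i * nsum e b i = \sum_j b j * nsum e a j.
Proof.
transitivity (\sum_i \sum_j (if j \in Omega e i then a i * b j else 0)).
  apply: eq_bigr => i _; rewrite nsumE mulr_sumr; apply: eq_bigr => j _.
  by case: ifP; rewrite ?mulr0.
rewrite exchange_big; apply: eq_bigr => j _; rewrite nsumE mulr_sumr.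
apply: eq_bigr => i _; rewrite omega_sym; case: ifP; rewrite ?mulr0 // mulrC //.
Qed.

Lemma nsumL (a b : R) (x y : 'I_N -> R) i :
  nsum e (fun j => a * x j + b * y j) i = a * nsum e x i + b * nsum e y i.
Proof. by rewrite /nsum big_split /= -!mulr_sumr. Qed.

Lemma nsumB (x y : 'I_N -> R) i :
  nsum e (fun j => x j - y j) i = nsum e x i - nsum e y i.
Proof. by rewrite /nsum sumrB. Qed.

Lemma nsum_ge0 (x : 'I_N -> R) i : (forall j, 0 <= x j) -> 0 <= nsum e x i.
Proof. by move=> h; rewrite /nsum sumr_ge0. Qed.

Lemma card_omega (j : 'I_N) : (#|Omega e j|)%:R <= d1.
Proof.
rewrite /d1 ler_nat.
have hj : j \in Omega e j by rewrite inE eqxx.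
have : (0 < #|Omega e j|)%N by apply/card_gt0P; exists j.
have := @leq_bigmax 'I_N (degree e) j.
rewrite /dmax /degree; case: #|Omega e j| => // n.
Qed.

Lemma nsum1 (j : 'I_N) : nsum e (fun _ => (1 : R)) j = (#|Omega e j|)%:R.
Proof. by rewrite /nsum sumr_const. Qed.

Lemma d1_gt0 : 0 < d1.
Proof. by rewrite /d1 ltr0Sn. Qed.

Lemma L5 (delta : R) (p q : 'I_N -> R) : 0 < delta ->
  \sum_i p i * nsum e q i <= d1^+2 / (2 * delta) * \sum_i p i ^+ 2 + delta / 2 * \sum_j q j ^+ 2.
Proof.
move=> hd.
have hc : 0 < d1 / delta by rewrite divr_gt0 // d1_gt0.
set c := d1 / delta.
have step1 : \sum_i p i * nsum e q i <=
   \sum_i (c / 2 * p i ^+ 2 * (#|Omega e i|)%:R + (2 * c)^-1 * nsum e (fun j => q j ^+ 2) i).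
  apply: ler_sum => i _.
  rewrite -nsum1 /nsum !mulr_sumr -big_split /=.
  apply: ler_sum => j _; rewrite mulr1.
  exact: amgm.
apply: (le_trans step1); rewrite big_split /=.
have e2 : \sum_i (2 * c)^-1 * nsum e (fun j => q j ^+ 2) i
        = (2 * c)^-1 * \sum_j q j ^+ 2 * (#|Omega e j|)%:R.
  rewrite -mulr_sumr; congr (_ * _).
  have := swap (fun _ => 1) (fun j => q j ^+ 2).
  under eq_bigr do rewrite mul1r.
  move=> ->; apply: eq_bigr => j _; by rewrite nsum1.
rewrite e2.
have b1 : \sum_i c / 2 * p i ^+ 2 * (#|Omega e i|)%:R <= c / 2 * d1 * \sum_i p i ^+ 2.
  rewrite mulr_sumr; apply: ler_sum => i _.
  rewrite [_ * d1 * _]mulrAC; apply: ler_wpM2l.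
    by rewrite mulr_ge0 // ?sqr_ge0 // divr_ge0 // ltW.
  exact: card_omega.
have b2 : \sum_j q j ^+ 2 * (#|Omega e j|)%:R <= d1 * \sum_j q j ^+ 2.
  rewrite mulr_sumr; apply: ler_sum => j _; rewrite mulrC.
  by apply: ler_wpM2r; [rewrite sqr_ge0 | exact: card_omega].
have hk : 0 <= (2 * c)^-1 by rewrite invr_ge0 mulr_ge0 // ltW.
have b2' := ler_wpM2l hk b2.
have hd1 : 0 < d1 := d1_gt0.
have ec1 : c / 2 * d1 = d1 ^+ 2 / (2 * delta).
  rewrite /c; field; lra.
have ec2 : (2 * c)^-1 * d1 = delta / 2.
  rewrite /c; field; have hn : 0 <= (dmax e)%:R :> R := ler0n _ _.
  apply/andP; split; lra.
rewrite ec1 in b1; rewrite [(2*c)^-1 * (d1 * _)]mulrA ec2 in b2'.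
lra.
Qed.


Variable delta alpha : R.
Hypothesis hd : 0 < delta.
Hypothesis ha : 0 < alpha.
Hypothesis hal : d1^+2 / (2 * delta) <= (2 * alpha)^-1.

Definition xh (lam : 'I_N -> R) i := proj01 (delta^-1 * (nsum e lam i - 1)).
Definition fobj (x : 'I_N -> R) := \sum_j (x j + delta/2 * x j ^+ 2).
Definition Lag (x lam : 'I_N -> R) := fobj x + \sum_i lam i * (1 - nsum e x i).
Definition phi lam := Lag (xh lam) lam.
Definition sqd (x y : 'I_N -> R) := \sum_i (x i - y i) ^+ 2.
Definition mpos (lam : 'I_N -> R) i := pos (lam i + alpha * (1 - nsum e (xh lam) i)).

Lemma sqd_ge0 x y : 0 <= sqd x y.
Proof. by rewrite /sqd sumr_ge0 // => i _; rewrite sqr_ge0. Qed.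

Lemma box_xh lam j : 0 <= xh lam j <= 1.
Proof.
rewrite /xh /proj01; set w := _ * _.
apply/andP; split.
- by rewrite le_min ler01 le_max lexx.
- by rewrite ge_min lexx.
Qed.

Lemma LagE x lam : Lag x lam =
  \sum_i lam i + \sum_j (x j + delta/2 * x j ^+ 2 - nsum e lam j * x j).
Proof.
rewrite /Lag /fobj sumrB.
have -> : \sum_i lam i * (1 - nsum e x i) = \sum_i lam i - \sum_i lam i * nsum e x i.
  by rewrite -sumrB; apply: eq_bigr => i _; rewrite mulrBr mulr1.
rewrite swap.
have -> : \sum_j nsum e lam j * x j = \sum_j x j * nsum e lam j.
  by apply: eq_bigr => j _; rewrite mulrC.
lra.
Qed.

Lemma L3 lam x : (forall j, 0 <= x j <= 1) ->
  Lag (xh lam) lam + delta/2 * sqd x (xh lam) <= Lag x lam.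
Proof.
move=> hx; rewrite !LagE -addrA lerD2l /sqd mulr_sumr -big_split /=.
apply: ler_sum => j _.
apply: coord_min => //.
Qed.

Lemma Conc lam mu : phi mu <= Lag (xh lam) mu.
Proof.
have := L3 mu (xh lam) (box_xh lam).
have := sqd_ge0 (xh lam) (xh mu).
rewrite /phi; move=> h1 h2.
have : 0 <= delta / 2 * sqd (xh lam) (xh mu) by rewrite mulr_ge0 // divr_ge0 // ltW.
lra.
Qed.

Lemma LagD x lam mu : Lag x mu = Lag x lam + \sum_i (mu i - lam i) * (1 - nsum e x i).
Proof.
rewrite /Lag -addrA; congr (_ + _); rewrite -big_split /=.
by apply: eq_bigr => i _; ring.
Qed.

Lemma L4 lam mu : Lag (xh lam) mu - d1^+2 / (2 * delta) * sqd mu lam <= phi mu.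
Proof.
set w := xh mu; set u := xh lam.
have e1 : phi mu = Lag w lam + \sum_i (mu i - lam i) * (1 - nsum e w i) by rewrite /phi (LagD _ lam).
have e2 := LagD u lam mu.
have e3 : \sum_i (mu i - lam i) * (1 - nsum e w i) - \sum_i (mu i - lam i) * (1 - nsum e u i)
   = - \sum_i (mu i - lam i) * nsum e (fun j => w j - u j) i.
  rewrite -sumrB -sumrN; apply: eq_bigr => i _; rewrite nsumB; ring.
have h3 := L3 lam (xh mu) (box_xh mu).
have h5 := L5 delta (fun i => mu i - lam i) (fun j => w j - u j) hd.
rewrite /= in h5.
have -> : sqd mu lam = \sum_i (mu i - lam i) ^+ 2 by [].
have e4 : sqd w u = \sum_j (w j - u j) ^+ 2 by [].
rewrite -/w -/u -e4 in h3 h5.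
lra.
Qed.

Lemma L6 u lam y : (forall i, 0 <= y i) ->
  Lag u y - (2 * alpha)^-1 * sqd y lam <=
  Lag u (fun i => pos (lam i + alpha * (1 - nsum e u i)))
   - (2 * alpha)^-1 * sqd (fun i => pos (lam i + alpha * (1 - nsum e u i))) lam.
Proof.
move=> hy.
have h : \sum_i (y i * (1 - nsum e u i) - (2 * alpha)^-1 * (y i - lam i) ^+ 2)
   <= \sum_i (pos (lam i + alpha * (1 - nsum e u i)) * (1 - nsum e u i)
      - (2 * alpha)^-1 * (pos (lam i + alpha * (1 - nsum e u i)) - lam i) ^+ 2).
  by apply: ler_sum => i _; apply: coord_proj.
rewrite !sumrB -!mulr_sumr in h.
rewrite /Lag /sqd; lra.
Qed.

Lemma KEY lam y c : (forall i, 0 <= y i) -> (2 * alpha)^-1 <= c ->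
  Lag (xh lam) y - c * sqd y lam <= phi (mpos lam).
Proof.
move=> hy hc.
have h6 := L6 (xh lam) lam y hy.
have h4 := L4 lam (mpos lam).
have hs := sqd_ge0 y lam.
have hs2 := sqd_ge0 (mpos lam) lam.
have h7 : (2 * alpha)^-1 * sqd y lam <= c * sqd y lam by apply: ler_wpM2r.
have h8 : d1^+2 / (2 * delta) * sqd (mpos lam) lam <= (2 * alpha)^-1 * sqd (mpos lam) lam
  by apply: ler_wpM2r.
rewrite /mpos in h4 h8 hs2 *.
lra.
Qed.


Definition St k := alg_state_at e delta alpha k.
Definition Ak (k : nat) : R := k.+1%:R * k.+2%:R / 4.

Lemma nS (k : nat) : k.+1%:R = k%:R + 1 :> R.
Proof. by rewrite natr1. Qed.

Lemma nS3 (k : nat) : k.+3%:R = k%:R + 3 :> R.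
Proof. by rewrite -addn3 natrD. Qed.
Lemma nS2 (k : nat) : k.+2%:R = k%:R + 2 :> R.
Proof. by rewrite -addn2 natrD. Qed.
Lemma nS1 (k : nat) : k.+1%:R = k%:R + 1 :> R.
Proof. by rewrite -addn1 natrD. Qed.

Lemma fobj_ext x y : (forall j, x j = y j) -> fobj x = fobj y.
Proof. by move=> h; apply: eq_bigr => j _; rewrite h. Qed.

Lemma nsum_ext (x y : 'I_N -> R) i : (forall j, x j = y j) -> nsum e x i = nsum e y i.
Proof. by move=> h; apply: eq_bigr => j _; rewrite h. Qed.

Lemma zrel k i : st_z (St k) i = k%:R * k.+1%:R / 4 * (1 - nsum e (st_xbar (St k)) i).
Proof.
elim: k i => [|k IH] i; first by rewrite /= !mul0r.
have hx : nsum e (st_xbar (St k.+1)) i =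
   k%:R / k.+2%:R * nsum e (st_xbar (St k)) i + 2 / k.+2%:R * nsum e (xh (st_lambda (St k))) i.
  by rewrite -nsumL.
have hz : st_z (St k.+1) i = st_z (St k) i + k.+1%:R / 2 * (1 - nsum e (xh (st_lambda (St k))) i) by [].
rewrite hz hx IH.
have hk : 0 <= k%:R :> R := ler0n _ _.
rewrite !nS; field; lra.
Qed.


Lemma mpos_ge0 lam i : 0 <= mpos lam i.
Proof. by rewrite /mpos /pos le_max lexx. Qed.

Lemma pos_ge0 (c : R) : 0 <= pos c.
Proof. by rewrite /pos le_max lexx. Qed.

Lemma Lag_lin u x : Lag u x = fobj u + \sum_i x i * (1 - nsum e u i).
Proof. by []. Qed.

Lemma inv k : forall nu : 'I_N -> R, (forall i, 0 <= nu i) ->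
  Ak k * fobj (st_xbar (St k.+1)) + \sum_i st_z (St k.+1) i * nu i
   - (2 * alpha)^-1 * \sum_i nu i ^+ 2 <= Ak k * phi (mpos (st_lambda (St k))).
Proof.
have hK : 0 < (2 * alpha)^-1 by rewrite invr_gt0 mulr_gt0.
elim: k => [|k IH] nu hnu.
- set u := xh (st_lambda (St 0)).
  have ex : fobj (st_xbar (St 1)) = fobj u.
    apply: fobj_ext => j /=; have -> : xhat_of e delta (alg_init R N) j = u j by []. by field.
  have ez : \sum_i st_z (St 1) i * nu i = 2^-1 * \sum_i nu i * (1 - nsum e u i).
    rewrite mulr_sumr; apply: eq_bigr => i _ /=; have -> : xhat_of e delta (alg_init R N) = u by []. by field.
  have es : sqd nu (st_lambda (St 0)) = \sum_i nu i ^+ 2.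
    by apply: eq_bigr => i _ /=; rewrite subr0.
  have hk := KEY (st_lambda (St 0)) nu (2 * (2 * alpha)^-1) hnu.
  rewrite es -/u Lag_lin in hk.
  have hA : Ak 0 = 2^-1 by rewrite /Ak; field.
  rewrite ex ez hA.
  have : (2 * alpha)^-1 <= 2 * (2 * alpha)^-1 by lra.
  move=> /hk; lra.
- set s := St k.+1.
  set lam := st_lambda s. set u := xh lam.
  set z := st_z s. set xb := st_xbar s. set mk := mpos (st_lambda (St k)).
  set v := fun i => alpha * pos (z i).
  have hk0 : 0 <= k%:R :> R := ler0n _ _.
  have hlam : forall i, lam i = (k.+1%:R/k.+3%:R) * mk i + (2/k.+3%:R) * v i.
    by move=> i; rewrite /lam /= /v mulrA.
  have hz' : forall i, st_z (St k.+2) i = z i + k.+2%:R/2 * (1 - nsum e u i) by [].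
  have hx' : forall j, st_xbar (St k.+2) j = k.+1%:R/k.+3%:R * xb j + 2/k.+3%:R * u j by [].
  set p : R := k.+1%:R/k.+3%:R.
  have hp : 0 <= p <= 1.
    rewrite /p ?(nS3 k) ?(nS2 k) ?(nS1 k); apply/andP; split.
      by rewrite divr_ge0 //; lra.
    by rewrite ler_pdivrMr ?mul1r; lra.
  have h1p : 2/k.+3%:R = 1 - p by rewrite /p ?(nS3 k) ?(nS2 k) ?(nS1 k); field; lra.
  have ha1 : fobj (st_xbar (St k.+2)) <= p * fobj xb + (1 - p) * fobj u.
    rewrite /fobj !mulr_sumr -big_split; apply: ler_sum => j _.
    rewrite hx' -/p h1p; apply: convq => //; exact: ltW.
  have hA1 : Ak k.+1 * p = Ak k by rewrite /Ak /p ?(nS3 k) ?(nS2 k) ?(nS1 k); field; lra.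
  have hA2 : Ak k.+1 * (1 - p) = k.+2%:R / 2 by rewrite /Ak /p ?(nS3 k) ?(nS2 k) ?(nS1 k); field; lra.
  have hAk1 : 0 <= Ak k.+1 by rewrite /Ak ?(nS3 k) ?(nS2 k) ?(nS1 k); apply: divr_ge0; [apply: mulr_ge0|]; lra.
  have hAk : 0 <= Ak k by rewrite /Ak ?(nS3 k) ?(nS2 k) ?(nS1 k); apply: divr_ge0; [apply: mulr_ge0|]; lra.
  have ha2 := ler_wpM2l hAk1 ha1.
  rewrite mulrDr [Ak _ * (p * _)]mulrA [Ak _ * ((1-p) * _)]mulrA hA1 hA2 in ha2.
  have hb : \sum_i (z i * nu i - (2*alpha)^-1 * nu i ^+ 2 + (2*alpha)^-1 * (nu i - v i)^+2)
         <= \sum_i (z i * v i - (2*alpha)^-1 * v i ^+ 2).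
    by apply: ler_sum => i _; apply: coord_sc.
  rewrite big_split /= !sumrB -!mulr_sumr in hb.
  have {}hb : \sum_i z i * nu i - (2 * alpha)^-1 * \sum_i nu i ^+ 2 +
    (2 * alpha)^-1 * \sum_i (nu i - v i) ^+ 2 <=
    \sum_i z i * v i - (2 * alpha)^-1 * \sum_i v i ^+ 2 by exact: hb.
  have hv : forall i, 0 <= v i by move=> i; rewrite /v mulr_ge0 ?pos_ge0 // ltW.
  have hc := IH v hv.
  have ez : \sum_i st_z (St k.+1) i * v i = \sum_i z i * v i by [].
  rewrite ez -/xb -/mk in hc.
  have hd' := Conc lam mk.
  have hd2 := ler_wpM2l hAk hd'.
  set y := fun i => (Ak k * mk i + k.+2%:R / 2 * nu i) / Ak k.+1.
  set c := (2 * alpha)^-1 * k.+3%:R / k.+2%:R.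
  have hy : forall i, 0 <= y i.
    move=> i; rewrite /y divr_ge0 // addr_ge0 // mulr_ge0 //.
      exact: mpos_ge0.
    by rewrite ?(nS3 k) ?(nS2 k) ?(nS1 k) divr_ge0 //; lra.
  have hc0 : (2 * alpha)^-1 <= c.
    rewrite /c -mulrA ler_pMr // ?(nS3 k) ?(nS2 k) ?(nS1 k) ler_pdivlMr ?mul1r; lra.
  have hkey := KEY lam y c hy hc0.
  have hkey2 := ler_wpM2l hAk1 hkey.
  rewrite mulrBr in hkey2.
  have I1 : Ak k.+1 * Lag u y = Ak k * Lag u mk + k.+2%:R / 2 * Lag u nu.
    rewrite !Lag_lin !mulrDr.
    have -> : Ak k.+1 * \sum_i y i * (1 - nsum e u i)
      = Ak k * \sum_i mk i * (1 - nsum e u i) + k.+2%:R / 2 * \sum_i nu i * (1 - nsum e u i).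
      rewrite !mulr_sumr -big_split; apply: eq_bigr => i _; rewrite /y /Ak /= ?(nS3 k) ?(nS2 k) ?(nS1 k); field; lra.
    have : Ak k.+1 = Ak k + k.+2%:R / 2 by rewrite /Ak ?(nS3 k) ?(nS2 k) ?(nS1 k); field.
    move=> ->; rewrite mulrDl; lra.
  have I2 : Ak k.+1 * (c * sqd y lam) = (2 * alpha)^-1 * \sum_i (nu i - v i)^+2.
    rewrite /sqd !mulr_sumr; apply: eq_bigr => i _.
    rewrite hlam /y /c /Ak ?(nS3 k) ?(nS2 k) ?(nS1 k); field.
    apply/and3P; split; [exact: lt0r_neq0 | apply: lt0r_neq0; lra | apply: lt0r_neq0; lra].
  rewrite I1 I2 (Lag_lin u nu) mulrDr in hkey2.
  have hz2 : \sum_i st_z (St k.+2) i * nu i = \sum_i z i * nu i + k.+2%:R / 2 * \sum_i nu i * (1 - nsum e u i).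
    rewrite mulr_sumr -big_split; apply: eq_bigr => i _; rewrite hz' /=; by field.
  rewrite hz2.
  have hmp : mpos (st_lambda (St k.+1)) = mpos lam by [].

  have hd4 : Ak k * phi mk <= Ak k * fobj u + Ak k * \sum_i mk i * (1 - nsum e u i).
    rewrite -mulrDr; have h := ler_wpM2l hAk hd'; exact: h.
  clear hd2 hd' hkey I1 I2.
  lra.
Qed.


Lemma posq (c : R) : c * pos c = pos c ^+ 2.
Proof. by rewrite /pos maxElt; case: ifP => h; rewrite ?mulr0 ?expr0n //= mulr0. Qed.

Lemma feas_nsum (xs : 'cV[R]_N) i :
  (adjA R e *m xs) i 0 = nsum e (fun j => xs j 0) i.
Proof.
rewrite mxE nsumE; apply: eq_bigr => j _; rewrite mxE inE eq_sym.
by case: ifP => _; rewrite ?mul1r ?mul0r.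
Qed.

Lemma final_bound k (xs : 'cV[R]_N) : lp_feasible e xs ->
  lp_obj (alg_x e delta alpha k) <= (1 + delta/2) * lp_obj xs + N%:R * (2 * alpha * Ak k)^-1.
Proof.
move=> [hfe hx0].
have hK : 0 < (2 * alpha)^-1 by rewrite invr_gt0 mulr_gt0.
have hk0 : 0 <= k%:R :> R := ler0n _ _.
have hAk : 0 < Ak k by rewrite /Ak ?(nS2 k) ?(nS1 k); apply: divr_gt0; [apply: mulr_gt0|]; lra.
set xb := st_xbar (St k.+1).
set r := fun i => pos (1 - nsum e xb i).
have hr : forall i, 0 <= r i by move=> i; exact: pos_ge0.
have eobj : lp_obj (alg_x e delta alpha k) = \sum_i xb i + \sum_i r i.
  by rewrite /lp_obj -big_split; apply: eq_bigr => i _; rewrite mxE.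
rewrite eobj.
set nu := fun i => alpha * Ak k * r i.
have hnu : forall i, 0 <= nu i by move=> i; rewrite /nu mulr_ge0 // mulr_ge0 // ltW.
have hinv := inv k nu hnu.
have ez : \sum_i st_z (St k.+1) i * nu i - (2 * alpha)^-1 * \sum_i nu i ^+ 2
   = alpha * Ak k ^+ 2 / 2 * \sum_i r i ^+ 2.
  rewrite !mulr_sumr -sumrB; apply: eq_bigr => i _.
  rewrite zrel -/xb /nu.
  have -> : k.+1%:R * k.+2%:R / 4 = Ak k by [].
  rewrite -/(r i).
  have hp := posq (1 - nsum e xb i).
  rewrite -/(r i) in hp.
  have -> : Ak k * (1 - nsum e xb i) * (alpha * Ak k * r i) = alpha * Ak k ^+ 2 * ((1 - nsum e xb i) * r i) by ring.
  rewrite hp; field; exact: lt0r_neq0.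
rewrite -addrA ez in hinv.
set x' := fun j => Num.min (xs j 0) 1.
have hbox : forall j, 0 <= x' j <= 1.
  move=> j; rewrite /x' le_min ge_min lexx orbT andbT; apply/andP; split => //; exact: ler01.
have hn1 : forall i, 1 <= nsum e x' i.
  move=> i; case: (boolP [exists j in Omega e i, 1 <= xs j 0]).
  - move=> /existsP[j /andP[hj h1]].
    rewrite /nsum (bigD1 j) //=.
    have -> : x' j = 1 by rewrite /x' minElt ltNge h1.
    rewrite lerDl sumr_ge0 // => l _.
    by case/andP: (hbox l).
  - move=> hno.
    have -> : nsum e x' i = nsum e (fun j => xs j 0) i.
      apply: eq_bigr => j hj; rewrite /x' minElt.
      case: ifP => // h; exfalso; move/negP: hno; apply; apply/existsP; exists j.
      by rewrite hj /= leNgt h.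
    by rewrite -feas_nsum.
have hphi : phi (mpos (st_lambda (St k))) <= fobj x'.
  have h3 := L3 (mpos (st_lambda (St k))) x' hbox.
  have hs : 0 <= delta / 2 * sqd x' (xh (mpos (st_lambda (St k)))).
    by rewrite mulr_ge0 ?sqd_ge0 // divr_ge0 // ltW.
  have hneg : \sum_i mpos (st_lambda (St k)) i * (1 - nsum e x' i) <= 0.
    rewrite sumr_le0 // => i _; rewrite mulr_ge0_le0 ?mpos_ge0 //.
    by rewrite subr_le0.
  rewrite /phi in h3 *; rewrite /Lag in h3 *; lra.
have h2 : Ak k * (fobj xb + alpha * Ak k / 2 * \sum_i r i ^+ 2) <= Ak k * fobj x'.
  have := ler_wpM2l (ltW hAk) hphi.
  have -> : Ak k * (fobj xb + alpha * Ak k / 2 * \sum_i r i ^+ 2) = Ak k * fobj xb + alpha * Ak k ^+ 2 / 2 * \sum_i r i ^+ 2.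
    by rewrite mulrDr; congr (_ + _); field.
  lra.
rewrite ler_pM2l // in h2.
have hxb : \sum_i xb i <= fobj xb.
  rewrite /fobj; apply: ler_sum => j _; by rewrite lerDl mulr_ge0 ?sqr_ge0 // divr_ge0 // ltW.
have hq : \sum_i r i - alpha * Ak k / 2 * \sum_i r i ^+ 2 <= N%:R * (2 * alpha * Ak k)^-1.
  have hc : 0 < alpha * Ak k / 2 by rewrite divr_gt0 // mulr_gt0.
  have : \sum_i (r i - alpha * Ak k / 2 * r i ^+ 2) <= \sum_(i < N) (4 * (alpha * Ak k / 2))^-1.
    by apply: ler_sum => i _; apply: quadb.
  rewrite (_ : (4 * (alpha * Ak k / 2))^-1 = (2 * alpha * Ak k)^-1); last by congr (_^-1); field.
  rewrite sumrB -mulr_sumr sumr_const card_ord => h.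
  by rewrite mulr_natl.
have hfx : fobj x' <= (1 + delta / 2) * lp_obj xs.
  rewrite /lp_obj /fobj mulr_sumr; apply: ler_sum => l _.
  have hb := hbox l; have h0 := hx0 l.
  have htx : x' l <= xs l 0 by rewrite /x' ge_min lexx.
  case/andP: hb => t0 t1.
  have ht2 : x' l ^+ 2 <= x' l by rewrite expr2 ler_piMl.
  have hd2 : 0 <= delta / 2 by rewrite divr_ge0 // ltW.
  have := ler_wpM2l hd2 ht2; have := ler_wpM2l hd2 htx.
  lra.
lra.
Qed.


Lemma obj_lb (xs : 'cV[R]_N) : lp_feasible e xs -> N%:R <= d1 * lp_obj xs.
Proof.
move=> [hfe hx0].
have h1 : N%:R <= \sum_i 1 * nsum e (fun j => xs j 0) i.
  have -> : N%:R = \sum_(i < N) (1 : R) by rewrite sumr_const card_ord.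
  apply: ler_sum => i _; rewrite mul1r -feas_nsum; exact: hfe.
rewrite swap in h1; apply: (le_trans h1).
rewrite /lp_obj mulr_sumr; apply: ler_sum => j _.
rewrite nsum1 mulrC; apply: ler_wpM2r => //; exact: card_omega.
Qed.

End Graph.

Theorem corollary1 (R : realType) :
  exists C : R, 0 < C /\
  forall (N : nat) (e : rel 'I_N), symmetric e -> irreflexive e ->
  forall eps : R, 0 < eps -> eps <= 1 ->
  forall xs : 'cV[R]_N, lp_optimal e xs ->
  let d1 : R := (dmax e).+1%:R in
  let delta := eps in
  let alpha := delta / (2 * d1 ^+ 2) in
  forall k : nat, C * (d1 * Num.sqrt d1) / eps <= k%:R ->
    (lp_obj (alg_x e delta alpha k) - lp_obj xs) / lp_obj xs <= eps.
Proof.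
exists 3; split; first by lra.
move=> N e esym _ eps he _ xs [hfeas _] d1 delta alpha k hk.
have hd1 : 0 < d1 by rewrite /d1 ltr0Sn.
have ha : 0 < alpha by rewrite /alpha /delta divr_gt0 // mulr_gt0 // exprn_gt0.
have hal : d1 ^+ 2 / (2 * delta) <= (2 * alpha)^-1.
  rewrite /alpha /delta.
  have -> : (2 * (eps / (2 * d1 ^+ 2)))^-1 = d1 ^+ 2 / eps.
    field; have hn : 0 <= (dmax e)%:R :> R := ler0n _ _; apply/andP; split; apply: lt0r_neq0; lra.
  have -> : d1 ^+ 2 / (2 * eps) = (d1 ^+ 2 / eps) / 2 by field; lra.
  have : 0 <= d1 ^+ 2 / eps by rewrite divr_ge0 // ?sqr_ge0 // ltW.
  lra.
have hb := @final_bound R N e esym delta alpha he ha hal k xs hfeas.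
have hN := @obj_lb R N e esym xs hfeas.
rewrite -/d1 in hN.
set O := lp_obj xs in hb hN *.
set X := lp_obj (alg_x e delta alpha k) in hb *.
have hO0 : 0 <= O.
  by rewrite /O /lp_obj sumr_ge0 // => i _; case: hfeas => _ h; exact: h.
have hk0 : 0 <= k%:R :> R := ler0n _ _.
have hAk : 0 < Ak R k by rewrite /Ak (nS2 R k) (nS1 R k); apply: divr_gt0; [apply: mulr_gt0|]; lra.
have hAk4 : k%:R ^+ 2 <= 4 * Ak R k.
  rewrite /Ak (nS2 R k) (nS1 R k).
  have -> : 4 * ((k%:R + 1) * (k%:R + 2) / 4) = (k%:R + 1) * (k%:R + 2) :> R by field.
  nra.
have hs0 : 0 <= Num.sqrt d1 := sqrtr_ge0 d1.
have hsq : Num.sqrt d1 ^+ 2 = d1 by rewrite sqr_sqrtr // ltW.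
have hke : 3 * (d1 * Num.sqrt d1) <= k%:R * eps.
  by rewrite -ler_pdivrMr // mulrA.
have h9 : 9 * d1 ^+ 3 <= (k%:R * eps) ^+ 2.
  have h0 : 0 <= 3 * (d1 * Num.sqrt d1) by rewrite mulr_ge0 // mulr_ge0 // ltW.
  have := ler_pM h0 h0 hke hke.
  have -> : 3 * (d1 * Num.sqrt d1) * (3 * (d1 * Num.sqrt d1)) = 9 * d1 ^+ 2 * Num.sqrt d1 ^+ 2.
    by rewrite !expr2; ring.
  by rewrite hsq expr2 -mulrA -expr2 -exprSr.
have hT : N%:R / (2 * alpha * Ak R k) <= delta / 2 * O.
  have hea : 0 < eps * Ak R k by rewrite mulr_gt0.
  have e1 : N%:R / (2 * alpha * Ak R k) = N%:R * d1 ^+ 2 / (eps * Ak R k).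
    rewrite /alpha /delta; field.
    have hn : 0 <= (dmax e)%:R :> R := ler0n _ _.
    apply/and3P; split; apply: lt0r_neq0; lra.
  rewrite e1 ler_pdivrMr //.
  have hN2 : N%:R * d1 ^+ 2 <= d1 ^+ 3 * O.
    have := ler_wpM2r (sqr_ge0 d1) hN.
    have -> : d1 * O * d1 ^+ 2 = d1 ^+ 3 * O by ring.
    exact.
  have h4 : 9 * d1 ^+ 3 <= 4 * (eps ^+ 2 * Ak R k).
    have h := ler_wpM2l (sqr_ge0 eps) hAk4.
    rewrite exprMn in h9.
    have -> : 4 * (eps ^+ 2 * Ak R k) = eps ^+ 2 * (4 * Ak R k) by ring.
    apply: (le_trans h9); rewrite mulrC; exact: h.
  have h5 : d1 ^+ 3 * O <= (4 / 9) * (eps ^+ 2 * Ak R k) * O.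
    apply: ler_wpM2r => //; lra.
  have -> : delta / 2 * O * (eps * Ak R k) = (eps ^+ 2 * Ak R k) * O / 2.
    by rewrite /delta expr2; field.
  have : 0 <= (eps ^+ 2 * Ak R k) * O by rewrite mulr_ge0 // mulr_ge0 ?sqr_ge0 // ltW.
  lra.
have hfin : X - O <= eps * O by rewrite /delta in hb hT; lra.
have [->|hOp] := eqVneq O 0; first by rewrite invr0 mulr0 ltW.
have hO : 0 < O by rewrite lt0r hOp hO0.
by rewrite ler_pdivrMr.
Qed.
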